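(* Let $\mathcal{O}$ be a shuffle operad with monomial relations generated by unary operations, i.e. an associative algebra $\mathbb{k}\langle x_1,\dots,x_n\rangle/(\mathcal{G})$ with $\mathcal{G}$ a set of monomials (words); tree monomials are words and divisors are occurrences of subwords. Number the divisors of a word $T$ that are relations (occurrences of elements of $\mathcal{G}$) according to the position of their first letter; this is an Anick numbering. For this numbering, the basis elements $v=T\otimes S_{i_1}\wedge\cdots\wedge S_{i_q}$ of $(\mathcal{A}_\mathcal{G})^{ab}_T$ satisfying conditions (I) and (II) below are precisely the elements $m\otimes S_1\wedge\cdots\wedge S_q$ where $m$ is an Anick $q$-chain and $S_1,\dots,S_q$ are the relations linked to form it (for $q=0$, the generators $x_i\otimes 1$): (I) for each $S_j$ present in $v$, $\partial_j(v)$ is decomposable; (II) for each $S_j$ not present in $v$, there exists $i<j$ with $\partial_i(v\wedge S_j)$ indecomposable.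
   Context: For a word $T$ with relation occurrences $S_1,\dots,S_p$, consider elements $T\otimes S_{i_1}\wedge\cdots\wedge S_{i_q}$ of $\mathbb{k}T\otimes\Lambda(S_1,\dots,S_p)$ (exterior algebra, $S_i$ of degree $1$) with degree $-1$ derivations $\partial_i$, $\partial_i(S_j)=\delta_{ij}$. Such an element is indecomposable if every pair of consecutive letters of $T$ lies inside (and not as the last/first letter boundary of) at least one of $S_{i_1},\dots,S_{i_q}$, i.e. every edge between two consecutive letters of $T$ is an internal edge of one of these occurrences; otherwise it is decomposable. $(\mathcal{A}_\mathcal{G})^{ab}_T$ has as basis the indecomposable such elements. An Anick numbering is a numbering of the relation occurrences such that $i<j<k$ and $S_i\cap S_j\ne\varnothing$ imply $S_i\cap S_k\subset S_j\cap S_k$. Anick chains and their tails are defined inductively: each generator $x_i$ is a $0$-chain equal to its tail; a $q$-chain ($q\ge1$) is a monomial $m=nst$, where $t$ is its tail, $ns$ is a $(q-1)$-chain with tail $s$, and $st$ has exactly one divisor which is a relation from $\mathcal{G}$, this divisor being a right divisor (suffix) of $st$. The relations linked in $m$ are the occurrences of relations created at each step of this inductive construction. *)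

(* Defs.v *)
From mathcomp Require Import all_boot.
Set Implicit Arguments. Unset Strict Implicit. Unset Printing Implicit Defensive.

(* An occurrence (divisor) of a subword in a word T is a pair (p, l):
   the subword of T starting at position p (0-based) of length l. *)
Definition occ := (nat * nat)%type.

Section Words.
Variable n : nat.
Notation word := (seq 'I_n).
Variable G : pred word.

Definition subw (T : word) (o : occ) : word := take o.2 (drop o.1 T).

(* The numbering S_1, S_2, ... of the relation
   occurrences of T is the order of this list (index 0 = S_1). *)
Definition occs (T : word) : seq occ :=
  [seq o <- [seq (p, l) | p <- iota 0 (size T), l <- iota 1 (size T - p)]
   | G (subw T o)].

Definition opos (o : occ) : pred nat := fun k => (o.1 <= k) && (k < o.1 + o.2).

(* T (x) /\ J is indecomposable: every edge k (between letters k and k+1)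
   is an internal edge of some occurrence of J. *)
Definition indecomposable (T : word) (J : seq occ) : bool :=
  all (fun k => has (fun o => (o.1 <= k) && (k.+1 < o.1 + o.2)) J)
      (iota 0 (size T).-1).

(* condition (I): for each S_j present, d_j(v) (= +- T (x) /\ (J \ S_j)) is
   decomposable *)
Definition condI (T : word) (J : seq occ) : bool :=
  all (fun o => ~~ indecomposable T (rem o J)) J.

(* condition (II): for each S_j of T not present in v, there is i < j with
   S_i present in v /\ S_j, and d_i(v /\ S_j) (= +- T (x) /\ ((J u S_j) \ S_i))
   indecomposable *)
Definition condII (T : word) (J : seq occ) : bool :=
  all (fun o => (o \notin J) ==>
        has (fun o' => (index o' (occs T) < index o (occs T))
                       && indecomposable T (rem o' (o :: J))) J)
      (occs T).

(* Anick chains: anick_chain q m t L means m is an Anick q-chain with tail t,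
   and L is the list of linked relation occurrences (as occurrences in m). *)
Inductive anick_chain : nat -> word -> word -> seq occ -> Prop :=
| anick0 (x : 'I_n) : anick_chain 0 [:: x] [:: x] [::]
| anickS q (w s t : word) (L : seq occ) (o : occ) :
    anick_chain q (w ++ s) s L ->
    occs (s ++ t) = [:: o] ->
    o.1 + o.2 = size (s ++ t) ->
    (* and it is not a divisor of t alone (it starts inside s) *)
    o.1 < size s ->
    anick_chain q.+1 (w ++ s ++ t) t (rcons L (size w + o.1, o.2)).

Definition anick_numbering (T : word) (num : seq occ) : Prop :=
  forall i j k, i < j -> j < k -> k < size num ->
    (exists p, opos (nth (0,0) num i) p && opos (nth (0,0) num j) p) ->
    forall p, opos (nth (0,0) num i) p -> opos (nth (0,0) num k) p ->
              opos (nth (0,0) num j) p.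

End Words.

(* Main.v *)
Require Import Defs.
From mathcomp Require Import all_boot zify.
Set Implicit Arguments. Unset Strict Implicit. Unset Printing Implicit Defensive.

Lemma occsP n (G : pred (seq 'I_n)) (T : seq 'I_n) (o : occ) :
  (o \in occs G T) = [&& 0 < o.2, o.1 + o.2 <= size T & G (subw T o)].
Proof.
rewrite /occs mem_filter andbC; case: (G _) => //=; last by rewrite !andbF.
rewrite andbT; case: o => p l /=.
apply/allpairsPdep/andP => [[x [y [Hx Hy [-> ->]]]] | [Hl Hpl]].
  by move: Hx Hy; rewrite !mem_iota; lia.
exists p, l; rewrite !mem_iota; split => //; lia.
Qed.

Lemma size_subw n (T : seq 'I_n) (o : occ) : o.1 + o.2 <= size T -> size (subw T o) = o.2.
Proof. by move=> h; rewrite /subw size_takel // size_drop; lia. Qed.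

Lemma occs_ge2 n (G : pred (seq 'I_n)) (HG2 : forall u, G u -> 1 < size u) (T : seq 'I_n) (o : occ) :
  o \in occs G T -> 1 < o.2 /\ o.1 + o.2 <= size T.
Proof.
rewrite occsP => /and3P [_ h g]; split => //.
by rewrite -(size_subw h); apply: HG2.
Qed.

Lemma subw_infix n (T : seq 'I_n) (o o' : occ) :
  o'.1 <= o.1 -> o.1 + o.2 <= o'.1 + o'.2 -> infix (subw T o) (subw T o').
Proof.
move=> h1 h2; apply/infixP; rewrite /subw.
set X := drop o'.1 T.
have -> : drop o.1 T = drop (o.1 - o'.1) X by rewrite /X drop_drop; congr drop; lia.
have -> : o'.2 = (o.1 - o'.1 + o.2) + (o'.2 - (o.1 - o'.1 + o.2)) by lia.
rewrite takeD takeD -catA.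
by exists (take (o.1 - o'.1) X), (take (o'.2 - (o.1 - o'.1 + o.2)) (drop (o.1 - o'.1 + o.2) X)).
Qed.

Lemma occ_contained n (G : pred (seq 'I_n)) (HG2 : forall u, G u -> 1 < size u)
  (HGmin : forall u v, G u -> G v -> infix u v -> u = v) (T : seq 'I_n) (o o' : occ) :
  o \in occs G T -> o' \in occs G T ->
  o'.1 <= o.1 -> o.1 + o.2 <= o'.1 + o'.2 -> o = o'.
Proof.
move=> Ho Ho' h1 h2.
have [g1 s1] := occs_ge2 HG2 Ho; have [g2 s2] := occs_ge2 HG2 Ho'.
move: Ho Ho'; rewrite !occsP => /and3P [_ _ G1] /and3P [_ _ G2].
have E := HGmin _ _ G1 G2 (subw_infix T h1 h2).
have := congr1 size E; rewrite !size_subw // => e2.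
case: o o' h1 h2 e2 {E G1 G2 g1 s1 g2 s2} => [p l] [p' l'] /= h1 h2 e2.
by congr pair; lia.
Qed.

Definition ltlex (x y : occ) := (x.1 < y.1) || ((x.1 == y.1) && (x.2 < y.2)).

Lemma pairs_pairwise N m k :
  pairwise ltlex [seq ((p, l) : occ) | p <- iota m k, l <- iota 1 (N - p)].
Proof.
elim: k m => [|k IH] m //=.
rewrite pairwise_cat IH andbT; apply/andP; split.
  apply/allrelP => x y /mapP [a _ ->] /allpairsPdep [p [l [Hp _ ->]]].
  by move: Hp; rewrite mem_iota /ltlex /= => /andP[h _]; rewrite h.
rewrite pairwise_map -sorted_pairwise; last by move=> ???; rewrite /relpre /ltlex /= !eqxx /=; lia.
apply: sub_sorted (iota_ltn_sorted 1 _) => a b; rewrite /relpre /ltlex /= eqxx /=; lia.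
Qed.

Lemma occs_pairwise_lex n (G : pred (seq 'I_n)) (T : seq 'I_n) : pairwise ltlex (occs G T).
Proof. exact: pairwise_filter (pairs_pairwise _ _ _). Qed.

Lemma occs_uniq n (G : pred (seq 'I_n)) (T : seq 'I_n) : uniq (occs G T).
Proof.
have := occs_pairwise_lex G T; elim: (occs G T) => //= x s IH /andP [H1 H2].
rewrite IH // andbT; apply/negP => xs; move/allP: H1 => /(_ x xs).
by rewrite /ltlex ltnn eqxx ltnn.
Qed.

Lemma start_eq n (G : pred (seq 'I_n)) (HG2 : forall u, G u -> 1 < size u)
  (HGmin : forall u v, G u -> G v -> infix u v -> u = v) (T : seq 'I_n) (o o' : occ) :
  o \in occs G T -> o' \in occs G T -> o.1 = o'.1 -> o = o'.
Proof.
move=> Ho Ho' e.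
case: (leqP (o.1 + o.2) (o'.1 + o'.2)) => h.
  by apply: (occ_contained HG2 HGmin Ho Ho'); lia.
symmetry; apply: (occ_contained HG2 HGmin Ho' Ho); lia.
Qed.

Lemma start_lt n (G : pred (seq 'I_n)) (HG2 : forall u, G u -> 1 < size u)
  (HGmin : forall u v, G u -> G v -> infix u v -> u = v) (T : seq 'I_n) (o o' : occ) :
  o \in occs G T -> o' \in occs G T -> o.1 < o'.1 -> o.1 + o.2 < o'.1 + o'.2.
Proof.
move=> Ho Ho' h; rewrite ltnNge; apply/negP => h2.
have := occ_contained HG2 HGmin Ho' Ho (ltnW h) h2; move=> e; rewrite e in h; lia.
Qed.

Lemma occs_pairwise n (G : pred (seq 'I_n)) (HG2 : forall u, G u -> 1 < size u)
  (HGmin : forall u v, G u -> G v -> infix u v -> u = v) (T : seq 'I_n) :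
  pairwise (fun x y : occ => x.1 < y.1) (occs G T).
Proof.
apply: (@sub_in_pairwise _ (mem (occs G T)) ltlex); last exact: occs_pairwise_lex.
  move=> x y Hx Hy; rewrite /ltlex => /orP [//|/andP [/eqP e h]].
  by have := start_eq HG2 HGmin Hx Hy e => E; rewrite E ltnn in h.
by apply/allP.
Qed.

Lemma index_lt n (G : pred (seq 'I_n)) (HG2 : forall u, G u -> 1 < size u)
  (HGmin : forall u v, G u -> G v -> infix u v -> u = v) (T : seq 'I_n) (o o' : occ) :
  o \in occs G T -> o' \in occs G T ->
  (index o (occs G T) < index o' (occs G T)) = (o.1 < o'.1).
Proof.
move=> Ho Ho'.
have /(pairwiseP (0,0)) P := occs_pairwise HG2 HGmin T.
have i1 : index o (occs G T) < size (occs G T) by rewrite index_mem.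
have i2 : index o' (occs G T) < size (occs G T) by rewrite index_mem.
case: (ltngtP (index o (occs G T)) (index o' (occs G T))) => h.
- by have := P _ _ i1 i2 h; rewrite !nth_index.
- have := P _ _ i2 i1 h; rewrite !nth_index // => H.
  by rewrite ltnNge (ltnW H).
- by have := congr1 (nth (0,0) (occs G T)) h; rewrite !nth_index // => ->; rewrite ltnn.
Qed.

Lemma part1 n (G : pred (seq 'I_n)) (HG2 : forall u, G u -> 1 < size u)
  (HGmin : forall u v, G u -> G v -> infix u v -> u = v) (T : seq 'I_n) :
  anick_numbering T (occs G T).
Proof.
move=> i j k hij hjk hk _ p.
have /(pairwiseP (0,0)) P := occs_pairwise HG2 HGmin T.
have hj : j < size (occs G T) by lia.
have hi : i < size (occs G T) by lia.
have Mi := mem_nth (0,0) hi; have Mj := mem_nth (0,0) hj.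
have s1 := P _ _ hi hj hij; have s2 := P _ _ hj hk hjk.
have e1 := start_lt HG2 HGmin Mi Mj s1.
rewrite /opos.
move: s1 s2 e1.
case: (nth (0,0) (occs G T) i) => a1 b1; case: (nth (0,0) (occs G T) j) => a2 b2;
case: (nth (0,0) (occs G T) k) => a3 b3 /= s1 s2 e1 /andP [h1 h2] /andP [h3 h4].
apply/andP; split; lia.
Qed.

Lemma mono_lt (f : nat -> nat) r : (forall i, i.+1 < r -> f i < f i.+1) ->
  forall i j, i < j -> j < r -> f i < f j.
Proof.
move=> H i; elim=> // j IH hij hj.
move: hij; rewrite ltnS leq_eqVlt => /orP [/eqP -> | h]; first by apply: H.
by apply: leq_trans (IH h (ltnW hj)) _; apply: ltnW; apply: H.
Qed.

Lemma mono_le (f : nat -> nat) r : (forall i, i.+1 < r -> f i < f i.+1) ->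
  forall i j, i <= j -> j < r -> f i <= f j.
Proof.
move=> H i j; rewrite leq_eqVlt => /orP [/eqP -> //|h] hj.
exact: ltnW (mono_lt H h hj).
Qed.

Lemma find_gap (f : nat -> nat) c m : f 0 < c -> c <= f m ->
  exists i, i < m /\ f i < c <= f i.+1.
Proof.
elim: m => [|m IH] h0 hm; first by lia.
case: (leqP c (f m)) => h.
  by have [i [h1 h2]] := IH h0 h; exists i; split => //; lia.
by exists m; split => //; apply/andP.
Qed.

Definition st (L : seq occ) i := (nth (0,0) L i).1.
Definition en (L : seq occ) i := (nth (0,0) L i).1 + (nth (0,0) L i).2.
Definition cov (o : occ) k := (o.1 <= k) && (k.+1 < o.1 + o.2).
Definition PP (L : seq occ) :=
  match L with [::] => 0 | [:: _] => 1 | _ => en L (size L).-2 end.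

Definition Shape n (G : pred (seq 'I_n)) T (L : seq occ) : Prop :=
  [/\ {subset L <= occs G T},
  (forall i, i.+1 < size L -> st L i < st L i.+1 < en L i),
  (forall i, i.+2 < size L -> en L i <= st L i.+2) &
  (if size L is 0 then size T = 1 else st L 0 = 0 /\ en L (size L).-1 = size T)].

Definition Window n (G : pred (seq 'I_n)) T (L : seq occ) : Prop :=
  forall j S, j < size L -> S \in occs G T -> PP (take j L) <= S.1 ->
    S.1 + S.2 <= en L j -> S = nth (0,0) L j.

Lemma indecP n (T : seq 'I_n) J :
  reflect (forall k, k.+1 < size T -> exists2 o, o \in J & cov o k) (indecomposable T J).
Proof.
apply: (iffP allP) => [H k hk | H k].
  have /hasP [o ho hc] := H k ltac:(rewrite mem_iota; lia).
  by exists o.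
rewrite mem_iota => hk; have [o ho hc] := H k ltac:(lia).
by apply/hasP; exists o.
Qed.

Lemma PP_take (L : seq occ) j : j <= size L ->
  PP (take j L) = if j is 0 then 0 else if j is 1 then 1 else en L j.-2.
Proof.
move=> hj.
have S : size (take j L) = j by rewrite size_takel.
have NT i : i < j -> nth (0,0) (take j L) i = nth (0,0) L i by move=> hi; apply: nth_take.
move: S NT; case: (take j L) => [|x [|y l]] /= S NT; rewrite -S //=.
by rewrite /en NT // -S.
Qed.

Lemma cover_lemma (L : seq occ) : (forall i, i.+1 < size L -> st L i.+1 < en L i) ->
  forall j1 j2 k, j1 <= j2 -> j2 < size L -> st L j1 <= k -> k.+2 <= en L j2 ->
  exists i, [/\ j1 <= i, i <= j2 & cov (nth (0,0) L i) k].
Proof.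
move=> Hov j1; elim=> [|j2 IH] k h12 h2 h1 h3.
  have j0 : j1 = 0 by lia.
  subst; exists 0; split => //; rewrite /cov; move: h1 h3; rewrite /st /en => h1 h3.
  by apply/andP; split.
move: h12; rewrite leq_eqVlt => /orP [/eqP E|h12].
  subst; exists j2.+1; split => //; move: h1 h3; rewrite /cov /st /en => h1 h3.
  by apply/andP; split.
case: (leqP k.+2 (en L j2)) => h4.
  by have [i [? ? ?]] := IH k ltac:(lia) ltac:(lia) h1 h4; exists i; split => //; lia.
have := Hov j2 h2 => h5.
exists j2.+1; split; [lia | done | ].
move: h3 h4 h5; rewrite /cov /st /en => h3 h4 h5; apply/andP; split; lia.
Qed.

Lemma L_facts n (G : pred (seq 'I_n)) (HG2 : forall u, G u -> 1 < size u) (T : seq 'I_n) (L : seq occ) :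
  {subset L <= occs G T} -> forall i, i < size L -> st L i + 2 <= en L i /\ en L i <= size T.
Proof.
move=> HL i hi; have := occs_ge2 HG2 (HL _ (mem_nth (0,0) hi)).
by rewrite /st /en; case: (nth _ _ _) => a b /=; lia.
Qed.


Lemma S_lt n (G : pred (seq 'I_n)) (HG2 : forall u, G u -> 1 < size u)
  (HGmin : forall u v, G u -> G v -> infix u v -> u = v) (T : seq 'I_n) (L : seq occ) (c d : nat) i :
  {subset L <= occs G T} -> (c, d) \in occs G T -> i < size L ->
  [/\ c < st L i -> c + d < en L i, st L i < c -> en L i < c + d &
      c = st L i -> (c, d) = nth (0,0) L i].
Proof.
move=> HL HS hi; have Hi := HL _ (mem_nth (0,0) hi).
rewrite /st /en; split => h.
- exact: (start_lt HG2 HGmin HS Hi h).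
- exact: (start_lt HG2 HGmin Hi HS h).
- exact: (start_eq HG2 HGmin HS Hi h).
Qed.

Lemma en_inc n (G : pred (seq 'I_n)) (HG2 : forall u, G u -> 1 < size u)
  (HGmin : forall u v, G u -> G v -> infix u v -> u = v) (T : seq 'I_n) (L : seq occ) :
  {subset L <= occs G T} -> (forall i, i.+1 < size L -> st L i < st L i.+1) ->
  forall i, i.+1 < size L -> en L i < en L i.+1.
Proof.
move=> HL Hs i hi.
have := S_lt HG2 HGmin (c := (nth (0,0) L i).1) (d := (nth (0,0) L i).2) (i := i.+1) HL.
rewrite -surjective_pairing => H; have [H1 _ _] := H (HL _ (mem_nth _ (ltnW hi))) hi.
exact: H1 (Hs i hi).
Qed.

Lemma nth_neq (L : seq occ) i j : (forall i, i.+1 < size L -> st L i < st L i.+1) ->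
  i < size L -> j < size L -> i != j -> nth (0,0) L i != nth (0,0) L j.
Proof.
move=> Hs hi hj hij; apply/negP => /eqP E.
have : st L i = st L j by rewrite /st E.
case: (ltngtP i j) hij => // h _.
  by have := mono_lt Hs h hj; lia.
by have := mono_lt Hs h hi; lia.
Qed.

Lemma memL (L : seq occ) x : x \in L -> exists2 i, i < size L & x = nth (0,0) L i.
Proof. by move/(nthP (0,0)) => [i hi <-]; exists i. Qed.

Lemma mem_nthL (L : seq occ) i : i < size L -> nth (0,0) L i \in L.
Proof. exact: mem_nth. Qed.

Ltac slia := repeat match goal with
  | H : is_true (_ \in _) |- _ => clear H
  | H : is_true (~~ (_ \in _)) |- _ => clear H
  | H : is_true (_ != _) |- _ => clear H
  | H : forall _, _ |- _ => clear H
  end; lia.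

Lemma covE (L : seq occ) l k : cov (nth (0,0) L l) k = (st L l <= k) && (k.+1 < en L l).
Proof. by []. Qed.

Lemma core_back n (G : pred (seq 'I_n)) (HG2 : forall u, G u -> 1 < size u)
  (HGmin : forall u v, G u -> G v -> infix u v -> u = v) (T : seq 'I_n) (J L : seq occ) :
  (forall i, i.+1 < size L -> st L i < st L i.+1) -> uniq J -> J =i L ->
  Shape G T L -> Window G T L ->
  [&& indecomposable T J, condI T J & condII G T J].
Proof.
move=> Hs Hu HJL [HL Hov Hgap Hend] Hw.
have Hov' i : i.+1 < size L -> st L i.+1 < en L i by move=> h; case/andP: (Hov i h).
have He := en_inc HG2 HGmin HL Hs.
have HF := L_facts HG2 HL.
case Er: (size L) Hend => [|r] Hend.
  have L0 : L = [::] by apply/size0nil.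
  have J0 : J = [::] by case: J HJL {Hu} => // x s /(_ x); rewrite L0 inE eqxx.
  rewrite J0; apply/and3P; split.
  - by apply/indecP => k; rewrite Hend.
  - by [].
  - by apply/allP => o Ho; have := occs_ge2 HG2 Ho; rewrite Hend; lia.
move: Hend => /= [H0 HN].
apply/and3P; split.
- apply/indecP => k hk.
  have [i [_ hi hc]] := cover_lemma Hov' (j1 := 0) (j2 := r) (k := k) (leq0n _)
     ltac:(lia) ltac:(lia) ltac:(lia).
  by exists (nth (0,0) L i) => //; rewrite HJL mem_nth // Er; lia.
- apply/allP => o; rewrite HJL => /memL [j hj ->].
  apply/negP => /indecP Hind.
  have Hrem x : x \in rem (nth (0,0) L j) J ->
      exists2 l, l < size L & (l != j) && (x == nth (0,0) L l).
    rewrite (mem_rem_uniq _ Hu) inE => /andP [hx]; rewrite HJL => /memL [l hl E].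
    exists l => //; apply/andP; split; last by rewrite E.
    by apply/eqP => lj; move: hx; rewrite E lj eqxx.
  case: j hj Hrem Hind => [|j] hj Hrem Hind.
    have := HF 0 hj => hf.
    have [x hx hc] := Hind 0 ltac:(lia).
    have [l hl /andP [hl0 /eqP E]] := Hrem x hx.
    subst x; move: hc; rewrite covE => hc.
    have := mono_lt Hs (i := 0) (j := l) ltac:(lia) hl; lia.
  have h1 := He j hj; have [h2 h2'] := HF j.+1 hj.
  have hj' : j < size L by lia.
  have [h3 h3'] := HF j hj'.
  have [x hx hc] := Hind (en L j).-1 ltac:(lia).
  have [l hl /andP [hl0 /eqP E]] := Hrem x hx.
  subst x; move: hc; rewrite covE => hc.
  case: (ltngtP l j.+1) hl0 => // h _.
    have hh : en L l <= en L j by apply: (mono_le He); lia.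
    lia.
  have := mono_le Hs (i := j.+2) (j := l) h hl.
  have := Hgap j ltac:(lia); lia.
- apply/allP => -[c d] HS; apply/implyP => SnJ.
  have SnL : (c,d) \notin L by rewrite -HJL.
  have HSL i : i < size L -> (c,d) != nth (0,0) L i.
    by move=> hi; apply: contraNneq SnL => ->; exact: mem_nth.
  have [hd hcd] := occs_ge2 HG2 HS.
  have SL i := S_lt HG2 HGmin HL HS (i := i).
  have c0 : 0 < c.
    case: (posnP c) => // c0; have [_ _ E] := SL 0 ltac:(lia).
    by have := HSL 0 ltac:(lia); rewrite E ?eqxx //; rewrite c0 H0.
  have cr : c <= st L r.
    rewrite leqNgt; apply/negP => h; have [_ E _] := SL r ltac:(lia).
    by have := E h; simpl in hcd; lia.
  have [i [hir /andP [hi1 hi2]]] := find_gap (f := st L) (c := c) (m := r) ltac:(lia) cr.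
  have hi2' : c < st L i.+1.
    rewrite ltn_neqAle hi2 andbT; apply/eqP => E; have [_ _ E2] := SL i.+1 ltac:(lia).
    by move: (HSL i.+1 ltac:(lia)); rewrite (E2 E) eqxx.
  have eS1 : c + d < en L i.+1 by have [E _ _] := SL i.+1 ltac:(lia); exact: E.
  have eS2 : en L i < c + d by have [_ E _] := SL i ltac:(lia); exact: E.
  have [i1 ci] : 0 < i /\ c < en L i.-1.
    have W := Hw i.+1 (c,d) ltac:(lia) HS; rewrite PP_take /= in W; last by lia.
    case: i hir hi1 hi2 hi2' eS1 eS2 W => [|i'] hir hi1 hi2 hi2' eS1 eS2 W.
      by move: (HSL 1 ltac:(lia)); rewrite W ?eqxx //; lia.
    case: (leqP (en L i') c) => h; last by split.
    by move: (HSL i'.+2 ltac:(lia)); rewrite W ?eqxx //; lia.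
  apply/hasP; exists (nth (0,0) L i); first by rewrite HJL mem_nth // Er; lia.
  apply/andP; split.
    by rewrite (index_lt HG2 HGmin (HL _ (mem_nth _ _)) HS) //;
      first [exact: hi1 | (rewrite Er; lia)].
  apply/indecP => k hk.
  have U : uniq ((c,d) :: J) by rewrite /= SnJ Hu.
  case: (leqP k.+2 (en L i.-1)) => h1.
    have [l [_ hl hc]] := cover_lemma Hov' (j1 := 0) (j2 := i.-1) (k := k) (leq0n _)
       ltac:(lia) ltac:(lia) h1.
    exists (nth (0,0) L l) => //.
    rewrite (mem_rem_uniq _ U) inE (nth_neq Hs) ?inE ?HJL ?mem_nth ?orbT //; try rewrite Er; lia.
  case: (leqP (st L i.+1) k) => h2.
    have [l [hl1 hl hc]] := cover_lemma Hov' (j1 := i.+1) (j2 := r) (k := k) ltac:(lia)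
       ltac:(lia) h2 ltac:(lia).
    exists (nth (0,0) L l) => //.
    rewrite (mem_rem_uniq _ U) inE (nth_neq Hs) ?inE ?HJL ?mem_nth ?orbT //; try rewrite Er; lia.
  exists (c,d).
    by rewrite (mem_rem_uniq _ U) inE HSL ?inE ?eqxx //; try rewrite Er; lia.
  have := Hov' i ltac:(lia).
  rewrite /cov /=; move=> h3; apply/andP; split; lia.
Qed.

Lemma core_fwd n (G : pred (seq 'I_n)) (HG2 : forall u, G u -> 1 < size u)
  (HGmin : forall u v, G u -> G v -> infix u v -> u = v) (T : seq 'I_n) (J L : seq occ) :
  T != [::] -> {subset L <= occs G T} ->
  (forall i, i.+1 < size L -> st L i < st L i.+1) -> uniq J -> J =i L ->
  indecomposable T J -> condI T J -> condII G T J -> Shape G T L /\ Window G T L.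
Proof.
move=> TnE HL Hs Hu HJL /indecP Hind HI HII.
have He := en_inc HG2 HGmin HL Hs.
have HF := L_facts HG2 HL.
have memJ x : x \in J -> exists2 l, l < size L & x = nth (0,0) L l.
  by rewrite HJL => /memL.
have T1 : 0 < size T by rewrite lt0n size_eq0.
case Er: (size L) => [|r].
  have L0 : L = [::] by apply/size0nil.
  have J0 : J = [::] by case: J HJL {Hu Hind HI HII memJ} => // x s /(_ x); rewrite L0 inE eqxx.
  have NT : size T = 1.
    case: (leqP (size T) 1) => h; first by slia.
    by have [x] := Hind 0 h; rewrite J0.
  split; last by move=> j S; rewrite Er.
  by split => // [i|i|]; rewrite Er.
have h0 : 0 < size L by rewrite Er.
have N2 : 1 < size T by have [? ?] := HF 0 h0; slia.
have H0 : st L 0 = 0.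
  have [x /memJ [l hl ->] hc] := Hind 0 N2.
  move: hc; rewrite covE => /andP [h _].
  have := mono_le Hs (i := 0) (j := l) (leq0n _) hl; slia.
have HN : en L r = size T.
  have [x /memJ [l hl ->] hc] := Hind (size T).-2 ltac:(slia).
  move: hc; rewrite covE => /andP [_ h].
  have h1 : en L l <= en L r by apply: (mono_le He); slia.
  have [? ?] := HF r ltac:(slia); slia.
have Hov' i : i.+1 < size L -> st L i.+1 < en L i.
  move=> hi.
  have h1 := Hs i hi; have [h2 h3] := HF i.+1 hi.
  have [x /memJ [l hl ->] hc] := Hind (st L i.+1).-1 ltac:(slia).
  move: hc; rewrite covE => /andP [h4 h5].
  case: (leqP l i) => h6.
    have h7 : en L l <= en L i by apply: (mono_le He); slia.
    slia.
  have := mono_le Hs (i := i.+1) (j := l) h6 hl; slia.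
have Hgap i : i.+2 < size L -> en L i <= st L i.+2.
  move=> hi; rewrite leqNgt; apply/negP => h.
  have M : nth (0,0) L i.+1 \in J by rewrite HJL mem_nthL //; slia.
  move/allP: HI => /(_ _ M); apply/negP; rewrite negbK.
  apply/indecP => k hk.
  case: (leqP k.+2 (en L i)) => h1.
    have [l [_ hl hc]] := cover_lemma Hov' (j1 := 0) (j2 := i) (k := k) (leq0n _)
       ltac:(slia) ltac:(slia) h1.
    exists (nth (0,0) L l) => //.
    rewrite (mem_rem_uniq _ Hu) inE (nth_neq Hs) ?HJL ?mem_nthL //; try rewrite Er; slia.
  have [l [hl1 hl hc]] := cover_lemma Hov' (j1 := i.+2) (j2 := r) (k := k) ltac:(slia)
       ltac:(slia) ltac:(slia) ltac:(slia).
  exists (nth (0,0) L l) => //.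
  rewrite (mem_rem_uniq _ Hu) inE (nth_neq Hs) ?HJL ?mem_nthL //; try rewrite Er; slia.
split.
  split => // [i hi|]; first by rewrite Hs // Hov'.
  by rewrite Er.
move=> j [c d] hj HS /= hP hE.
case: (eqVneq (c,d) (nth (0,0) L j)) => // hne.
exfalso.
have Hj := HL _ (mem_nthL hj).
have hcj : c < st L j.
  rewrite ltnNge; apply/negP => h.
  by move: hne; rewrite (occ_contained HG2 HGmin HS Hj) ?eqxx.
case: j hj hP hE hne Hj hcj => [|j'] hj hP hE hne Hj hcj; first by slia.
rewrite PP_take in hP; last by slia.
have hca : st L j' < c.
  case: j' hj hP hE hne Hj hcj => [|j''] hj hP hE hne Hj hcj; first by slia.
  simpl in hP; have hh : j''.+1 < size L by slia.
  have := Hov' j'' hh; slia.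
have SnJ : (c,d) \notin J.
  apply/negP => /memJ [l hl E].
  have El : st L l = c by rewrite /st -E.
  case: (leqP l j') => h.
    have := mono_le Hs h ltac:(slia); slia.
  have := mono_le Hs (i := j'.+1) (j := l) h hl; slia.
move/allP: HII => /(_ _ HS); rewrite SnJ /= => /hasP [o' /memJ [i hi ->]] /andP [hidx hind].
rewrite (index_lt HG2 HGmin (HL _ (mem_nthL hi)) HS) /= in hidx.
have hidx' : st L i < c by exact: hidx.
have hij : i <= j'.
  rewrite leqNgt; apply/negP => h.
  have := mono_le Hs (i := j'.+1) (j := i) h hi; slia.
have U : uniq ((c,d) :: J) by rewrite /= SnJ Hu.
move/indecP: hind => Hr.
case: i hi hidx hidx' hij Hr => [|i'] hi hidx hidx' hij Hr.
  have [x] := Hr 0 N2.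
  rewrite (mem_rem_uniq _ U) !inE => /andP [hx /orP [/eqP -> | /memJ [l hl E]]].
    by rewrite /cov /=; slia.
  subst x; rewrite covE.
  case: (posnP l) => l0; first by move: hx; rewrite l0 eqxx.
  have := mono_lt Hs (i := 0) (j := l) l0 hl; slia.
have h1 := He i' hi; have [h2 h3] := HF i'.+1 hi.
have hi' : i' < size L by slia.
have [h4 h5] := HF i' hi'.
have [x] := Hr (en L i').-1 ltac:(slia).
rewrite (mem_rem_uniq _ U) !inE => /andP [hx /orP [/eqP -> | /memJ [l hl E]]].
  case: j' hj hP hE hne Hj hcj hca hij => [|j''] hj hP hE hne Hj hcj hca hij; first by slia.
  simpl in hP; have : en L i' <= en L j'' by apply: (mono_le He); slia.
  rewrite /cov /=; slia.
subst x; rewrite covE.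
case: (ltngtP l i'.+1) hx => h hx.
- have : en L l <= en L i' by apply: (mono_le He); slia.
  slia.
- have := mono_le Hs (i := i'.+2) (j := l) h hl.
  have := Hgap i' ltac:(slia); slia.
- by move: hx; rewrite h eqxx.
Qed.

Lemma occs_sub n (G : pred (seq 'I_n)) (u v x : seq 'I_n) (p l : nat) : p + l <= size v ->
  ((size u + p, l) \in occs G (u ++ v ++ x)) = ((p, l) \in occs G v).
Proof.
move=> h; rewrite !occsP /=.
case: (posnP l) => [->|l0] //=.
have -> : subw (u ++ v ++ x) (size u + p, l) = subw v (p, l).
  rewrite /subw /= addnC -drop_drop drop_size_cat // drop_cat ifT; last by lia.
  by rewrite takel_cat // size_drop; lia.
rewrite size_cat size_cat h; congr andb; apply/idP; lia.
Qed.

Lemma occs_prefix n (G : pred (seq 'I_n)) (v x : seq 'I_n) (o : occ) : o.1 + o.2 <= size v ->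
  (o \in occs G (v ++ x)) = (o \in occs G v).
Proof.
case: o => p l h; have := @occs_sub n G [::] v x p l h.
by rewrite /= add0n.
Qed.

Lemma occs_prefix1 n (G : pred (seq 'I_n)) (v x : seq 'I_n) (o : occ) :
  o \in occs G v -> o \in occs G (v ++ x).
Proof.
move=> Ho; rewrite occs_prefix //; move: Ho; rewrite occsP => /and3P [].
by [].
Qed.

Lemma occs_drop n (G : pred (seq 'I_n)) (T : seq 'I_n) k (p l : nat) :
  k <= size T -> ((k + p, l) \in occs G T) = ((p, l) \in occs G (drop k T)).
Proof.
move=> hk.
case: (leqP (p + l) (size (drop k T))) => h.
  have := @occs_sub n G (take k T) (drop k T) [::] p l h; rewrite cats0 cat_take_drop size_takel //.
have -> : ((p, l) \in occs G (drop k T)) = false.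
  by apply/negbTE; rewrite occsP /=; apply/negP => /and3P [_ h2 _]; lia.
rewrite size_drop in h.
by apply/negbTE; rewrite occsP /=; apply/negP => /and3P [_ h2 _]; lia.
Qed.

Lemma uniq_single (T : eqType) (s : seq T) x :
  uniq s -> x \in s -> (forall y, y \in s -> y = x) -> s = [:: x].
Proof.
case: s => [|a [|b s]] //=.
  by rewrite inE => _ /eqP ->.
move=> /andP [hab _] _ H; have ea := H a (mem_head _ _).
have eb := H b ltac:(by rewrite !inE eqxx orbT).
by move: hab; rewrite ea eb inE eqxx.
Qed.

Lemma nth_rcons_lt (L : seq occ) o i : i < size L -> nth (0,0) (rcons L o) i = nth (0,0) L i.
Proof. by move=> h; rewrite nth_rcons h. Qed.

Lemma nth_rcons_eq (L : seq occ) o : nth (0,0) (rcons L o) (size L) = o.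
Proof. by rewrite nth_rcons ltnn eqxx. Qed.

Lemma take_rcons_le (L : seq occ) o j : j <= size L -> take j (rcons L o) = take j L.
Proof. by move=> h; rewrite -cats1 takel_cat. Qed.

Lemma PPE (L : seq occ) :
  PP L = if size L is 0 then 0 else if size L is 1 then 1 else en L (size L).-2.
Proof. by case: L => [|x [|y l]]. Qed.

Lemma PP_rcons (L : seq occ) o :
  PP (rcons L o) = if size L is 0 then 1 else en L (size L).-1.
Proof.
rewrite PPE size_rcons; case E: (size L) => [|m] //=.
by rewrite /en nth_rcons ifT // E.
Qed.

Lemma st_rcons_lt (L : seq occ) o i : i < size L -> st (rcons L o) i = st L i.
Proof. by move=> h; rewrite /st nth_rcons_lt. Qed.
Lemma en_rcons_lt (L : seq occ) o i : i < size L -> en (rcons L o) i = en L i.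
Proof. by move=> h; rewrite /en nth_rcons_lt. Qed.
Lemma st_rcons_eq (L : seq occ) o : st (rcons L o) (size L) = o.1.
Proof. by rewrite /st nth_rcons_eq. Qed.
Lemma en_rcons_eq (L : seq occ) o : en (rcons L o) (size L) = o.1 + o.2.
Proof. by rewrite /en nth_rcons_eq. Qed.

Lemma chain_shape n (G : pred (seq 'I_n)) (HG2 : forall u, G u -> 1 < size u)
  (HGmin : forall u v, G u -> G v -> infix u v -> u = v) q (T t : seq 'I_n) (L : seq occ) :
  anick_chain G q T t L -> [/\ size L = q, Shape G T L, Window G T L & t = drop (PP L) T].
Proof.
elim=> {q T t L} [x | q w s t L o Hc [IHs [HL Hov Hgap Hend] IHw IHt] Hocc Hoe Hos].
  by split => //.
have ss : 0 < size s by slia.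
have sw : size w = PP L.
  have := congr1 size IHt; rewrite size_drop size_cat; slia.
have Ho : o \in occs G (s ++ t) by rewrite Hocc mem_head.
have Hoe' : o.1 + o.2 <= size (s ++ t) by rewrite Hoe.
have Ho' : (size w + o.1, o.2) \in occs G (w ++ s ++ t).
  by have := @occs_sub n G w (s ++ t) [::] o.1 o.2 Hoe'; rewrite cats0 -surjective_pairing => ->.
have Hs i : i.+1 < size L -> st L i < st L i.+1 by move=> h; case/andP: (Hov i h).
have He := en_inc HG2 HGmin HL Hs.
have HF := L_facts HG2 HL.
have PPv : PP (rcons L (size w + o.1, o.2)) = size (w ++ s).
  rewrite PP_rcons; case Er: (size L) Hend => [|m] //.
  by rewrite /= => [[]].
have Hsz : size (w ++ s ++ t) = size (w ++ s) + size t by rewrite catA size_cat.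
split.
- by rewrite size_rcons IHs.
- split.
  + move=> y; rewrite mem_rcons inE => /orP [/eqP -> // | /HL hy].
    by rewrite catA; exact: occs_prefix1.
  + move=> i; rewrite size_rcons ltnS leq_eqVlt => /orP [/eqP hi | hi].
      rewrite st_rcons_lt; last by slia.
      rewrite en_rcons_lt; last by slia.
      rewrite hi st_rcons_eq /=.
      move: Hend; rewrite -hi /= => [[H0 HN]].
      have hsw : size (w ++ s) = size w + size s by rewrite size_cat.
      have sw' := sw; rewrite PPE -hi in sw'.
      rewrite HN; apply/andP; split; last by slia.
      case: i hi HN H0 sw' => [|i'] hi HN H0 sw'; first by rewrite H0; slia.
      simpl in sw'; have := Hov i' ltac:(slia); slia.
    rewrite !st_rcons_lt ?en_rcons_lt; [exact: Hov | slia | slia | slia].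
  + move=> i; rewrite size_rcons ltnS leq_eqVlt => /orP [/eqP hi | hi].
      rewrite en_rcons_lt; last by slia.
      rewrite hi st_rcons_eq /=.
      have sw' := sw; rewrite PPE -hi /= in sw'; slia.
    rewrite st_rcons_lt ?en_rcons_lt; [exact: Hgap | slia | slia].
  + rewrite size_rcons /= en_rcons_eq /=; split; last first.
      by move: Hoe; rewrite Hsz !size_cat; slia.
    case Er: (size L) Hend => [|m] Hend.
      rewrite -Er st_rcons_eq /=.
      have sw' := sw; rewrite PPE Er in sw'.
      have : size (w ++ s) = size w + size s by rewrite size_cat.
      by move: Hend => /= Hend; slia.
    by rewrite st_rcons_lt ?Er //; case: Hend.
- move=> j [c d]; rewrite size_rcons ltnS leq_eqVlt => /orP [/eqP hj | hj] HS /= hP hE.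
    rewrite hj take_rcons_le // take_size in hP.
    rewrite hj en_rcons_eq /= in hE.
    rewrite hj nth_rcons_eq.
    have c_ge : size w <= c by rewrite sw.
    have E := @occs_drop n G (w ++ s ++ t) (size w) (c - size w) d ltac:(rewrite size_cat; slia).
    move: HS; rewrite -{1}(subnKC c_ge) E drop_size_cat // Hocc inE => /eqP E1.
    by rewrite -E1 /= subnKC.
  rewrite take_rcons_le in hP; last by slia.
  rewrite en_rcons_lt in hE; last by slia.
  rewrite nth_rcons_lt; last by slia.
  apply: IHw => //.
  have [_ h2] := HF j hj.
  by move: HS; rewrite catA occs_prefix //=; slia.
- by rewrite PPv catA drop_size_cat.
Qed.

Lemma drop_take_cat (T : Type) (s : seq T) p K : p <= K -> K <= size s ->
  drop p (take K s) ++ drop K s = drop p s.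
Proof.
move=> h1 h2; rewrite -{3}(cat_take_drop K s) drop_cat size_takel //.
case: ltnP => h3 //.
have -> : p = K by lia.
by rewrite subnn drop0 drop_oversize ?size_takel.
Qed.

Lemma shape_chain n (G : pred (seq 'I_n)) (HG2 : forall u, G u -> 1 < size u)
  (HGmin : forall u v, G u -> G v -> infix u v -> u = v) (L : seq occ) :
  forall T : seq 'I_n, T != [::] -> Shape G T L -> Window G T L ->
  anick_chain G (size L) T (drop (PP L) T) L.
Proof.
elim/last_ind: L => [|L o IH] T TnE [HL Hov Hgap Hend] Hw.
  simpl in Hend.
  case: T TnE Hend HL Hw => [|x [|y T']] // _ _ _ _.
  exact: anick0.
have Hs i : i.+1 < size (rcons L o) -> st (rcons L o) i < st (rcons L o) i.+1.
  by move=> h; case/andP: (Hov i h).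
have He := en_inc HG2 HGmin HL Hs.
have HF := L_facts HG2 HL.
rewrite size_rcons /= en_rcons_eq in Hend; case: Hend => [H0 HN].
have Hmo : o \in occs G T by apply: HL; rewrite mem_rcons mem_head.
set K := PP (rcons L o).
have [k1 k1' k2 k3] : [/\ 1 <= K, K <= size T, PP L <= o.1 & o.1 < K].
  rewrite /K PP_rcons PPE.
  case Er: (size L) => [|m].
    move: H0; rewrite -Er st_rcons_eq => H0.
    have [? ?] := occs_ge2 HG2 Hmo; rewrite H0; split => //; slia.
  have h1 := Hov m; rewrite size_rcons Er in h1; have := h1 ltac:(slia).
  rewrite -Er st_rcons_eq Er en_rcons_lt ?Er // => /andP [h2 h3].
  have h4 := He m; rewrite size_rcons Er in h4; have := h4 ltac:(slia).
  rewrite en_rcons_lt ?Er // -Er en_rcons_eq HN => h5.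
  rewrite Er /=; split; [slia | slia | | slia].
  case: m Er h1 h2 h3 h4 h5 => [|m'] Er h1 h2 h3 h4 h5 /=; first by slia.
  have := Hgap m'; rewrite size_rcons Er en_rcons_lt ?Er // -Er st_rcons_eq Er; apply.
  by [].
set T0 := take K T.
have sT0 : size T0 = K by rewrite size_takel.
have Hmono i : i < size L -> en L i <= K.
  move=> hi; rewrite /K PP_rcons; case Er: (size L) => [|m]; first by rewrite Er in hi.
  have := mono_le He (i := i) (j := m); rewrite !en_rcons_lt ?Er //; last by slia.
  apply; rewrite ?size_rcons; slia.
have Hsh : Shape G T0 L.
  split.
  - move=> x /memL [i hi ->].
    have hi' : i < size (rcons L o) by rewrite size_rcons; slia.
    have := HL _ (mem_nthL hi').
    rewrite nth_rcons_lt // -(cat_take_drop K T) occs_prefix //.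
    by rewrite sT0; have := Hmono i hi; rewrite /en.
  - move=> i hi; have hi1 : i.+1 < size (rcons L o) by rewrite size_rcons; slia.
    have := Hov i hi1.
    rewrite (st_rcons_lt _ (i := i)); last slia.
    rewrite (st_rcons_lt _ (i := i.+1)); last slia.
    by rewrite (en_rcons_lt _ (i := i)); last slia.
  - move=> i hi; have hi1 : i.+2 < size (rcons L o) by rewrite size_rcons; slia.
    have := Hgap i hi1.
    rewrite (st_rcons_lt _ (i := i.+2)); last slia.
    by rewrite (en_rcons_lt _ (i := i)); last slia.
  - case Er: (size L) => [|m].
      by rewrite sT0 /K PP_rcons Er.
    split; first by rewrite -(st_rcons_lt o) ?Er.
    by rewrite sT0 /K PP_rcons Er.
have Hwi : Window G T0 L.
  move=> j S hj HS hP hE.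
  have := Hw j S; rewrite size_rcons take_rcons_le ?en_rcons_lt ?nth_rcons_lt //; last by slia.
  apply => //; first by slia.
  by rewrite -(cat_take_drop K T); exact: occs_prefix1.
have T0nE : T0 != [::] by rewrite -size_eq0 sT0; slia.
have Hc := IH T0 T0nE Hsh Hwi.
rewrite -{1}(cat_take_drop (PP L) T0) in Hc.
have pK : PP L <= K by slia.
have st_eq : drop (PP L) T0 ++ drop K T = drop (PP L) T := drop_take_cat pK k1'.
have Hocc : occs G (drop (PP L) T0 ++ drop K T) = [:: (o.1 - PP L, o.2)].
  rewrite st_eq; apply: uniq_single; first exact: occs_uniq.
    rewrite -occs_drop; last slia.
    by rewrite subnKC // -surjective_pairing.
  move=> [p l] Hy.
  have [_ fits] := occs_ge2 HG2 Hy; rewrite size_drop /= in fits.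
  have Hy' : (PP L + p, l) \in occs G T by rewrite occs_drop //; slia.
  have hL : size L < size (rcons L o) by rewrite size_rcons.
  have := Hw (size L) (PP L + p, l) hL Hy'.
  rewrite take_rcons_le // take_size en_rcons_eq nth_rcons_eq /= => E.
  have {}E := E (leq_addr _ _) ltac:(slia).
  by rewrite -E /= addKn.
have Hoe : (o.1 - PP L) + o.2 = size (drop (PP L) T0 ++ drop K T).
  by rewrite st_eq size_drop; slia.
have Hos : o.1 - PP L < size (drop (PP L) T0) by rewrite size_drop sT0; slia.
have := anickS Hc Hocc Hoe Hos.
rewrite catA !cat_take_drop size_takel ?sT0 // /= subnKC // -surjective_pairing size_rcons.
done.
Qed.

Unset Implicit Arguments.

Theorem mainTheorem4 (n : nat) (G : pred (seq 'I_n))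
  (* relations are monomials of degree >= 2 *)
  (HG2 : forall u, G u -> 1 < size u)
  (* G is a minimal (reduced) set of monomials: no relation divides another *)
  (HGmin : forall u v, G u -> G v -> infix u v -> u = v) :
  (* the numbering by position of the first letter is an Anick numbering *)
  (forall T : seq 'I_n, anick_numbering T (occs G T)) /\
  (* characterization of the basis elements satisfying (I) and (II) *)
  (forall (T : seq 'I_n) (J : seq occ),
     T != [::] -> uniq J -> {subset J <= occs G T} ->
     (indecomposable T J && condI T J && condII G T J)
     <-> (exists q t L, anick_chain G q T t L /\ perm_eq L J)).
Proof.
split; first by move=> T; exact: part1.
move=> T J TnE Hu HJ; split.
- move=> /andP [/andP [Hi HI] HII].
  set L := [seq o <- occs G T | o \in J].
  have HL : {subset L <= occs G T} by move=> x; rewrite mem_filter => /andP [].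
  have HJL : J =i L.
    move=> x; rewrite mem_filter; case E: (x \in J) => //=; by rewrite HJ.
  have P := pairwise_filter (mem J) (occs_pairwise HG2 HGmin T).
  move/(pairwiseP (0,0)): P => P.
  have Hs i : i.+1 < size L -> st L i < st L i.+1.
    by move=> hi; apply: P => //; rewrite inE //; apply: ltnW.
  have [Sh W] := core_fwd HG2 HGmin TnE HL Hs Hu HJL Hi HI HII.
  exists (size L), (drop (PP L) T), L; split; first exact: shape_chain.
  apply: uniq_perm; [exact: filter_uniq (occs_uniq G T) | exact: Hu | ].
  by move=> x; rewrite HJL.
- move=> [q [t [L [Hc Hp]]]].
  have [_ Sh W _] := chain_shape HG2 HGmin Hc.
  have Hs i : i.+1 < size L -> st L i < st L i.+1.
    by move=> h; case: Sh => _ Hov _ _; case/andP: (Hov i h).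
  have HJL : J =i L by move=> x; rewrite (perm_mem Hp).
  by rewrite -andbA; apply: (core_back HG2 HGmin Hs Hu HJL Sh W).
Qed.
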